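(* Assume $V=W$, that $\mathcal{A}$ is coercive with constant $\alpha>0$ (i.e. $\alpha\|\phi\|_W^2\le\mathcal{A}(\phi,\phi)$ for all $\phi\in W$), and that $W_\theta\cup S_\theta\subseteq V_\eta$. Let $(\tilde w^n_\theta)\subset W_\theta$ be a minimizing sequence, i.e. $\lim_n\|u-\tilde w^n_\theta\|_{op,\eta}=\inf_{w_\theta\in W_\theta}\|u-w_\theta\|_{op,\eta}$, which converges weakly in $W$ to $u^*_\theta\in\mathrm{cl}^{seq}_w(W_\theta)$. Then $$\|u-u^*_\theta\|_W\le\Big(1+\frac{2M}{\alpha}\Big)\inf_{w_\theta\in W_\theta}\|u-w_\theta\|_W.$$
   Context: $W$ and $V$ are reflexive separable real Banach spaces (here $V=W$, a Hilbert space with scalar product $(\cdot,\cdot)_W$). $\mathcal{A}:W\times V\to\mathbb{R}$ is a bilinear form with $\mathcal{A}(w,v)\le M\|w\|_W\|v\|_V$ for all $w,v$, $\mathcal{F}:V\to\mathbb{R}$ is bounded linear, and $u\in W$ is the unique solution of $\mathcal{A}(u,v)=\mathcal{F}(v)$ for all $v\in V$. $W_\theta\subseteq W$ and $V_\eta\subseteq V$ are arbitrary subsets, $V_\eta$ containing an element of nonzero norm. For $w\in W$, $\|w\|_{op,\eta}:=\sup_{v_\eta\in V_\eta,\ \|v_\eta\|_V\neq0}\mathcal{A}(w,v_\eta)/\|v_\eta\|_V$. $S_\theta:=\{w_1-w_2:\ w_1,w_2\in W_\theta\}$. $\mathrm{cl}^{seq}_w(W_\theta)$ is the set of all weak limits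 in $W$ of sequences in $W_\theta$. *)

(* Defs.v *)
From HB Require Import structures.
From mathcomp Require Import all_boot all_order all_algebra.
From mathcomp Require Import all_classical all_reals all_analysis.
Set Implicit Arguments. Unset Strict Implicit. Unset Printing Implicit Defensive.
Import Order.TTheory GRing.Theory Num.Theory.
Import numFieldNormedType.Exports.
Local Open Scope classical_set_scope.
Local Open Scope ring_scope.

Definition is_inner_product (R : realType) (W : normedModType R)
  (ip : W -> W -> R) : Prop :=
  (forall x y, ip x y = ip y x) /\
  (forall (a : R) x y z, ip (a *: x + y) z = a * ip x z + ip y z) /\
  (forall x, ip x x = `|x| ^+ 2).

Definition separable (R : realType) (W : normedModType R) : Prop :=
  exists D : set W, countable D /\ closure D = setT.

Definition bounded_linear_functional (R : realType) (W : normedModType R)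
  (f : W -> R) : Prop :=
  (forall (a : R) x y, f (a *: x + y) = a * f x + f y) /\ continuous f.

Definition bilinear_form (R : realType) (W : normedModType R)
  (A : W -> W -> R) : Prop :=
  (forall (a : R) x y z, A (a *: x + y) z = a * A x z + A y z) /\
  (forall (a : R) x y z, A z (a *: x + y) = a * A z x + A z y).

Definition weak_cvg (R : realType) (W : normedModType R)
  (w : nat -> W) (x : W) : Prop :=
  forall f : W -> R, bounded_linear_functional f ->
    f (w n) @[n --> \oo] --> f x.

Definition weak_seq_closure (R : realType) (W : normedModType R)
  (S : set W) : set W :=
  [set x | exists w : nat -> W, (forall n, S (w n)) /\ weak_cvg w x].

Definition opnorm (R : realType) (W : normedModType R)
  (A : W -> W -> R) (Veta : set W) (w : W) : R :=
  sup [set A w v / `|v| | v in [set v | Veta v /\ `|v| != 0]].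

Definition diffset (R : realType) (W : normedModType R) (S : set W) : set W :=
  [set x | exists w1 w2, S w1 /\ S w2 /\ x = w1 - w2].

(* Main.v *)
Require Import Defs.
From HB Require Import structures.
From mathcomp Require Import all_boot all_order all_algebra.
From mathcomp Require Import all_classical all_reals all_analysis.
Import Order.TTheory GRing.Theory Num.Theory.
Import numFieldNormedType.Exports.
Local Open Scope classical_set_scope.
Local Open Scope ring_scope.
From mathcomp Require Import ring lra.
Set Implicit Arguments. Unset Strict Implicit.

Section L.
Variables (R : realType) (W : normedModType R) (f : W -> W -> R).
Hypothesis H : forall (a : R) x y z, f (a *: x + y) z = a * f x z + f y z.
Lemma lin0 z : f 0 z = 0.
Proof. have := H 1 0 0 z; rewrite scaler0 addr0 mul1r; lra. Qed.
Lemma linN x z : f (- x) z = - f x z.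
Proof. have := H (-1) x 0 z; rewrite scaleN1r addr0 lin0 addr0 mulN1r //. Qed.
Lemma linD x y z : f (x + y) z = f x z + f y z.
Proof. have := H 1 x y z; rewrite scale1r mul1r //. Qed.
Lemma linB x y z : f (x - y) z = f x z - f y z.
Proof. by rewrite linD linN. Qed.
End L.
Section IP.
Variables (R : realType) (W : normedModType R) (ip : W -> W -> R).
Hypotheses (Hs : forall x y, ip x y = ip y x)
 (Hl : forall (a : R) x y z, ip (a *: x + y) z = a * ip x z + ip y z)
 (Hn : forall x, ip x x = `|x| ^+ 2).
Lemma ipB2 a b : `|a - b| ^+ 2 = `|a| ^+ 2 - 2 * ip a b + `|b| ^+ 2.
Proof.
rewrite -!Hn !(linB Hl) (Hs a (a - b)) (Hs b (a - b)) !(linB Hl) (Hs b a); lra.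
Qed.
Lemma ipD2 a b : `|a + b| ^+ 2 = `|a| ^+ 2 + 2 * ip a b + `|b| ^+ 2.
Proof.
rewrite -!Hn !(linD Hl) (Hs a (a + b)) (Hs b (a + b)) !(linD Hl) (Hs b a); lra.
Qed.
Lemma ip_cont z : continuous (fun x => ip x z).
Proof.
have -> : (fun x => ip x z) = (fun x => (`|x + z| * `|x + z| - `|x - z| * `|x - z|) / 4).
  apply/funext => x; rewrite -!expr2 ipD2 ipB2.
  rewrite -[ip x z]mulr1 -(@divff _ 4) //; lra.
move=> x; apply: cvgM; last exact: cvg_cst.
apply: cvgB; apply: cvgM; apply: cvg_norm; (apply: cvgD || apply: cvgB);
  (exact: cvg_id || exact: cvg_cst).
Qed.
End IP.
Lemma op_ub (R : realType) (W : normedModType R) (A : W -> W -> R) (M : R) Veta x v :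
  (forall w v, A w v <= M * `|w| * `|v|) -> Veta v -> `|v| != 0 ->
  A x v / `|v| <= opnorm A Veta x.
Proof.
move=> HM Vv nv; apply: ub_le_sup; last by exists v.
exists (M * `|x|) => _ [y [_ ny] <-].
rewrite ler_pdivrMr; first exact: HM.
by rewrite lt_def ny normr_ge0.
Qed.

Lemma op_le (R : realType) (W : normedModType R) (A : W -> W -> R) (M : R) Veta x :
  (forall w v, A w v <= M * `|w| * `|v|) -> (exists v, Veta v /\ `|v| != 0) ->
  opnorm A Veta x <= M * `|x|.
Proof.
move=> HM [v0 [V0 n0]]; apply: ge_sup; first by exists (A x v0 / `|v0|), v0.
move=> _ [y [_ ny] <-].
rewrite ler_pdivrMr; first exact: HM.
by rewrite lt_def ny normr_ge0.
Qed.

Unset Implicit Arguments.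

Theorem lemma2 (R : realType) (W : completeNormedModType R)
  (ip : W -> W -> R) (A : W -> W -> R) (F : W -> R) (M alpha : R)
  (u : W) (Wth Veta : set W) (wt : nat -> W) (ustar : W) :
  is_inner_product ip ->
  separable W ->
  bilinear_form A ->
  (forall w v, A w v <= M * `|w| * `|v|) ->
  bounded_linear_functional F ->
  (forall v, A u v = F v) ->
  (forall u', (forall v, A u' v = F v) -> u' = u) ->
  (exists v, Veta v /\ `|v| != 0) ->
  0 < alpha ->
  (forall phi, alpha * `|phi| ^+ 2 <= A phi phi) ->
  Wth `|` diffset Wth `<=` Veta ->
  (forall n, Wth (wt n)) ->
  opnorm A Veta (u - wt n) @[n --> \oo] -->
    inf [set opnorm A Veta (u - w) | w in Wth] ->
  weak_cvg wt ustar ->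
  weak_seq_closure Wth ustar ->
  `|u - ustar| <= (1 + 2 * M / alpha) * inf [set `|u - w| | w in Wth].
Proof.
move=> [Hs [Hl Hn]] _ [HA1 HA2] HM _ _ _ Hv0 a0 Hco Hsub Hwt Hlim Hweak _.
have [v0 [V0 n0]] := Hv0.
have Mpos : 0 < M.
  have p0 : 0 < `|v0| by rewrite lt_def n0 normr_ge0.
  have h := le_trans (Hco v0) (HM v0 v0).
  rewrite -mulrA -expr2 ler_pM2r ?exprn_gt0 // in h.
  exact: lt_le_trans h.
have key : forall w, Wth w -> `|w - ustar| <= 2 * M * `|u - w| / alpha.
  move=> w Ww; apply/ler_addgt0Pr => e e0.
  set B := 2 * M * `|u - w| / alpha + e.
  have B0 : 0 <= B.
    rewrite /B; apply: addr_ge0; last exact: ltW.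
    apply: divr_ge0; last exact: ltW.
    apply: mulr_ge0; last exact: normr_ge0.
    apply: mulr_ge0 => //; exact: ltW.
  set l := inf _ in Hlim.
  have hl : l <= M * `|u - w|.
    case: (pselect (has_lbound [set opnorm A Veta (u - w0) | w0 in Wth])) => hb.
      apply: (le_trans _ (@op_le _ _ A M Veta (u - w) HM Hv0)); apply: (ge_inf hb); by exists w.
    rewrite /l inf_out; last by move=> [_ /hb].
    by apply: mulr_ge0; [exact: ltW | exact: normr_ge0].
  have ev : \forall n \near \oo, `|w - wt n| <= B.
    have hlt : l < l + alpha * e by rewrite ltrDl mulr_gt0.
    have := @cvgr_lt _ _ \oo eventually_filter _ l Hlim _ hlt.
    apply: filterS => n hn.
    have [->|nz] := eqVneq (w - wt n) 0; first by rewrite normr0.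
    set v := w - wt n.
    have Vv : Veta v by apply: Hsub; right; exists w, (wt n).
    have nv : `|v| != 0 by rewrite normr_eq0.
    have p0 : 0 < `|v| by rewrite lt_def nv normr_ge0.
    have h1 := @op_ub _ _ A M Veta (u - wt n) v HM Vv nv.
    rewrite ler_pdivrMr // in h1.
    have h2 := Hco v. have h3 := HM (w - u) v.
    have eqA : A v v = A (w - u) v + A (u - wt n) v.
      by rewrite -(linD HA1) addrA subrK.
    rewrite distrC in h3.
    have g : alpha * `|v| <= 2 * M * `|u - w| + alpha * e by nra.
    rewrite -(ler_pM2l a0) /B mulrDr; apply: (le_trans g); rewrite lerD2r.
    by rewrite [alpha * _]mulrC divfK // gt_eqF.
  set z := w - ustar.
  have hf := Hweak (fun x => ip x z) (conj (fun a x y => Hl a x y z) (@ip_cont _ _ ip Hs Hl Hn z)).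
  have : 2 * (ip w z - ip ustar z) <= B ^+ 2 + `|z| ^+ 2.
    apply: (@ler_cvg_to nat \oo eventually_filter R
              (fun n => 2 * (ip w z - ip (wt n) z))
              (fun _ => B ^+ 2 + `|z| ^+ 2)).
    - apply: cvgM; first exact: cvg_cst.
      by apply: cvgB; [exact: cvg_cst | exact: hf].
    - exact: cvg_cst.
    - apply: filterS ev => n hn.
      have := @ipB2 _ _ ip Hs Hl Hn (w - wt n) z; rewrite (linB Hl) => h.
      have h0 := normr_ge0 (w - wt n - z).
      have h0' := normr_ge0 (w - wt n).
      nra.
  rewrite -(linB Hl) -/z Hn => h.
  have := normr_ge0 z; nra.
set c := 1 + 2 * M / alpha.
have hall : forall w, Wth w -> `|u - ustar| <= c * `|u - w|.
  move=> w Ww; have h := key w Ww.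
  have -> : u - ustar = (u - w) + (w - ustar) by rewrite addrA subrK.
  apply: le_trans (ler_normD _ _) _.
  by rewrite /c mulrDl mul1r lerD2l mulrAC.
have c0 : 0 < c by rewrite /c addr_gt0 // divr_gt0 // mulr_gt0.
rewrite mulrC -ler_pdivrMr //.
apply: lb_le_inf; first by exists `|u - wt 0|, (wt 0).
move=> _ [w Ww <-]; rewrite ler_pdivrMr // mulrC; exact: hall.
Qed.
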